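(* Let $S,T$ be ordered trees, let $f\colon T\to S$ be a rigid surjection with injection $i$, and let $v\in S$. Then the domain of $f^v$ is $T^{i(v)}$, the image of $T^{i(v)}$ under $f^v$ is $S^v$, and $f^v\colon T^{i(v)}\to S^v$ is a sealed rigid surjection.
   Context: A tree is a finite, non-empty partially ordered set $(T,\sqsubseteq_T)$ with a smallest element (the root) such that the set of predecessors of each element is linearly ordered; each node counts as its own predecessor and successor. $v\wedge_T w$ is the $\sqsubseteq_T$-largest common predecessor of $v,w$. A tree is ordered if the immediate successors of each node carry a fixed linear order; this induces the lexicographic linear order $\leq_T$: $v\leq_T w$ if $v\sqsubseteq_T w$, and for incomparable $v,w$, $v\leq_T w$ iff the immediate successor of $v\wedge_T w$ below $v$ precedes the one below $w$. A morphism $e\colon S\to T$ satisfies $e(v\wedge_S w)=e(v)\wedge_T e(w)$, is monotone from $\leq_S$ to $\leq_T$, and maps root to root. A function $f\colon T\to S$ is a rigid surjection if there is a morphism $e\colon S\to T$ with $f\circ e={\rm id}_S$ and $e(f(w))\sqsubseteq_T w$ for all $w$; this $e$ is unique and called the injection of $f$. For $v\in S$, $S^v=\{w\in S\mid w\leq_S v\}$ (an ordered tree with inherited orders). For a rigid surjection $f\colon T\to S$ with injection $i$ and $v\in S$, $f^v=f\upharpoonright T^{i(v)}$. A rigid surjection $f\colon T\to S$ is sealed if its injection maps the $\leq_S$-largest leaf of $S$ to the $\leq_T$-largest leaf of $T$ (a leaf is a $\sqsubseteq$-maximal node). *)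

(* Defs.v *)
From mathcomp Require Import all_boot.
Set Implicit Arguments. Unset Strict Implicit. Unset Printing Implicit Defensive.

(* An (ordered-tree) structure: a finite carrier type, the set of nodes,
   the tree order [tle] (v ⊑ w), and the order [sord] used to compare
   immediate successors of a common node ([sord a b] = a precedes-or-equals b). *)
Record otree := OTree {
  ot_car : finType;
  ot_nodes : Finite.sort ot_car -> Prop;
  ot_le : Finite.sort ot_car -> Finite.sort ot_car -> Prop;
  ot_so : Finite.sort ot_car -> Finite.sort ot_car -> Prop }.

Definition car (T : otree) : Type := Finite.sort (ot_car T).
Coercion car : otree >-> Sortclass.

Section Trees.
Variable T : otree.
Local Notation N := (@ot_nodes T).
Local Notation le := (@ot_le T).
Local Notation so := (@ot_so T).

Definition is_root (r : T) := N r /\ forall w, N w -> le r w.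

(* (T, ⊑) is a tree: finite (carrier is a finType), non-empty partial order
   with a smallest element, predecessors of each node linearly ordered. *)
Definition is_tree :=
  [/\ exists r, is_root r,
      (forall v, N v -> le v v),
      (forall v w, N v -> N w -> le v w -> le w v -> v = w),
      (forall u v w, N u -> N v -> N w -> le u v -> le v w -> le u w) &
      (forall u u' w, N u -> N u' -> N w -> le u w -> le u' w ->
         le u u' \/ le u' u)].

Definition isucc (x y : T) :=
  [/\ N x, N y, le x y, x <> y &
      forall z, N z -> le x z -> le z y -> z = x \/ z = y].

Definition is_otree :=
  is_tree /\
  forall x, N x ->
   [/\ (forall a, isucc x a -> so a a),
       (forall a b, isucc x a -> isucc x b -> so a b -> so b a -> a = b),
       (forall a b c, isucc x a -> isucc x b -> isucc x c ->
          so a b -> so b c -> so a c) &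
       (forall a b, isucc x a -> isucc x b -> so a b \/ so b a)].

Definition is_meet (v w m : T) :=
  [/\ N m, le m v, le m w &
      forall u, N u -> le u v -> le u w -> le u m].

Definition lex (v w : T) :=
  le v w \/
  (~ le v w /\ ~ le w v /\
   exists m a b, [/\ is_meet v w m, isucc m a, isucc m b, le a v & le b w]
                 /\ a <> b /\ so a b).

Definition is_leaf (l : T) := N l /\ forall w, N w -> le l w -> w = l.

Definition is_largest_leaf (l : T) :=
  is_leaf l /\ forall l', is_leaf l' -> lex l' l.

Definition subtree (v : T) : otree :=
  @OTree (ot_car T) (fun w => N w /\ lex w v) le so.

End Trees.

Definition is_morphism (S T : otree) (e : S -> T) :=
  [/\ (forall v, @ot_nodes S v -> @ot_nodes T (e v)),
      (forall v w m, @ot_nodes S v -> @ot_nodes S w ->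
         is_meet v w m -> is_meet (e v) (e w) (e m)),
      (forall v w, @ot_nodes S v -> @ot_nodes S w -> lex v w -> lex (e v) (e w)) &
      (forall r, is_root r -> is_root (e r))].

Definition is_injection_of (T S : otree) (f : T -> S) (e : S -> T) :=
  [/\ is_morphism e,
      (forall v, @ot_nodes S v -> f (e v) = v) &
      (forall w, @ot_nodes T w -> @ot_le T (e (f w)) w)].

Definition rigid_surjection (T S : otree) (f : T -> S) :=
  (forall w, @ot_nodes T w -> @ot_nodes S (f w)) /\
  exists e : S -> T, is_injection_of f e.

Definition sealed (T S : otree) (f : T -> S) :=
  rigid_surjection f /\
  forall e : S -> T, is_injection_of f e ->
    forall l, is_largest_leaf l -> is_largest_leaf (e l).

(* Main.v *)
Require Import Defs.
From mathcomp Require Import all_boot.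
From Stdlib Require Import Classical.
Set Implicit Arguments. Unset Strict Implicit. Unset Printing Implicit Defensive.

Lemma chain_ext_seq (A : eqType) (R : A -> A -> Prop) (P : A -> Prop) :
  (forall x, P x -> R x x) ->
  (forall x y z, P x -> P y -> P z -> R x y -> R y z -> R x z) ->
  (forall x y, P x -> P y -> R x y \/ R y x) ->
  forall s : seq A, (exists x, P x /\ x \in s) ->
  exists m, P m /\ forall y, P y -> y \in s -> R y m.
Proof.
move=> Rr Rt Rl; elim=> [|a s IH] [x [Px xs]]; first by [].
have [Pa|nPa] := classic (P a).
- have [[y [Py ys]]|nex] := classic (exists y, P y /\ y \in s).
  + have [m [Pm Hm]] := IH (ex_intro _ y (conj Py ys)).
    have [am|ma] := Rl a m Pa Pm.
    * exists m; split=> // z Pz; rewrite in_cons => /orP [/eqP->|zs]; auto.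
    * exists a; split=> // z Pz; rewrite in_cons => /orP [/eqP->|zs]; auto.
      by apply: (Rt z m a) => //; apply: Hm.
  + exists a; split=> // z Pz; rewrite in_cons => /orP [/eqP->|zs]; auto.
    by exfalso; apply: nex; exists z.
- have xs' : x \in s.
    move: xs; rewrite in_cons => /orP [/eqP xa|//]; by subst.
  have [m [Pm Hm]] := IH (ex_intro _ x (conj Px xs')).
  exists m; split=> // z Pz; rewrite in_cons => /orP [/eqP za|zs]; last by auto.
  by subst.
Qed.

Lemma chain_ext (A : finType) (R : A -> A -> Prop) (P : A -> Prop) (x0 : A) :
  P x0 ->
  (forall x, P x -> R x x) ->
  (forall x y z, P x -> P y -> P z -> R x y -> R y z -> R x z) ->
  (forall x y, P x -> P y -> R x y \/ R y x) ->
  exists m, P m /\ forall y, P y -> R y m.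
Proof.
move=> P0 Rr Rt Rl.
have [m [Pm Hm]] := @chain_ext_seq A R P Rr Rt Rl (index_enum A) (ex_intro _ x0 (conj P0 (mem_index_enum x0))).
exists m; split=> // y Py; apply: Hm => //; exact: mem_index_enum.
Qed.

Section Gen.
Variable T : otree.
Hypothesis oT : is_otree T.
Local Notation N := (@ot_nodes T).
Local Notation le := (@ot_le T).
Local Notation so := (@ot_so T).

Lemma tle_refl v : N v -> le v v.
Proof. by case: oT => [[_ H _ _ _] _]; apply: H. Qed.
Lemma tle_anti v w : N v -> N w -> le v w -> le w v -> v = w.
Proof. by case: oT => [[_ _ H _ _] _]; apply: H. Qed.
Lemma tle_trans u v w : N u -> N v -> N w -> le u v -> le v w -> le u w.
Proof. by case: oT => [[_ _ _ H _] _]; apply: H. Qed.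
Lemma tle_lin u u' w : N u -> N u' -> N w -> le u w -> le u' w -> le u u' \/ le u' u.
Proof. by case: oT => [[_ _ _ _ H] _]; apply: H. Qed.
Lemma troot : exists r, @is_root T r.
Proof. by case: oT => [[H _ _ _ _] _]. Qed.

Lemma so_refl m a : isucc m a -> so a a.
Proof.
move=> A; case: oT => _ H; case: (A) => Nm _ _ _ _.
by case: (H m Nm) => H2 _ _ _; apply: H2.
Qed.
Lemma so_anti m a b : isucc m a -> isucc m b -> so a b -> so b a -> a = b.
Proof.
move=> A B; case: oT => _ H; case: (A) => Nm _ _ _ _.
by case: (H m Nm) => _ H2 _ _; apply: H2.
Qed.
Lemma so_trans m a b c : isucc m a -> isucc m b -> isucc m c -> so a b -> so b c -> so a c.
Proof.
move=> A B C; case: oT => _ H; case: (A) => Nm _ _ _ _.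
by case: (H m Nm) => _ _ H2 _; apply: H2.
Qed.
Lemma so_total m a b : isucc m a -> isucc m b -> so a b \/ so b a.
Proof.
move=> A B; case: oT => _ H; case: (A) => Nm _ _ _ _.
by case: (H m Nm) => _ _ _ H2; apply: H2.
Qed.

Lemma meet_ex v w : N v -> N w -> exists m, is_meet v w m.
Proof.
move=> Nv Nw; have [r [Nr Hr]] := troot.
pose P u := N u /\ le u v /\ le u w.
have [m [[Nm [mv mw]] Hm]] : exists m, P m /\ forall y, P y -> le y m.
  apply: (@chain_ext _ le P r).
  - by split=> //; split; apply: Hr.
  - by move=> x [Nx _]; apply: tle_refl.
  - by move=> x y z [? _] [? _] [? _]; apply: tle_trans.
  - by move=> x y [Nx [xv _]] [Ny [yv _]]; exact: (tle_lin Nx Ny Nv xv yv).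
by exists m; split=> // u Nu uv uw; apply: Hm.
Qed.

Lemma succ_ex m x : N m -> N x -> le m x -> m <> x -> exists a, isucc m a /\ le a x.
Proof.
move=> Nm Nx mx nmx.
pose P z := N z /\ le m z /\ le z x /\ z <> m.
have [a [[Na [ma [ax nam]]] Ha]] : exists a, P a /\ forall y, P y -> le a y.
  apply: (@chain_ext _ (fun a b => le b a) P x).
  - by split=> //; split=> //; split; [apply: tle_refl| move=> e; apply: nmx].
  - by move=> z [Nz _]; apply: tle_refl.
  - by move=> z y t [? _] [? _] [? _] h1 h2; apply: (tle_trans (v:=y)).
  - by move=> z y [Nz [_ [zx _]]] [Ny [_ [yx _]]]; exact: (tle_lin Ny Nz Nx yx zx).
exists a; split=> //; split=> //; first by move=> e; apply: nam.
move=> z Nz mz za; have [->|nzm] := classic (z = m); first by left.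
right; apply: tle_anti => //; apply: Ha; split=> //; split=> //; split=> //.
exact: (tle_trans Nz Na Nx).
Qed.

Lemma uniq_succ m a b x : isucc m a -> isucc m b -> N x -> le a x -> le b x -> a = b.
Proof.
move=> [Nm Na ma nma Ha] [_ Nb mb nmb Hb] Nx ax bx.
have [ab|ba] := tle_lin Na Nb Nx ax bx.
- by case: (Hb a Na ma ab) => // e; exfalso; apply: nma.
- by case: (Ha b Nb mb ba) => // e; exfalso; apply: nmb.
Qed.

Lemma succ_below m a u y : isucc m a -> N u -> le a u -> N y -> le m y -> le y u -> y <> m -> le a y.
Proof.
move=> [Nm Na ma nma Ha] Nu au Ny my yu nym.
have [ya|//] := tle_lin Ny Na Nu yu au.
by case: (Ha y Ny my ya) => // ->; apply: tle_refl.
Qed.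

Lemma meet_sym (v w m : T) : is_meet v w m -> is_meet w v m.
Proof. by move=> [Nm mv mw H]; split=> // u Nu uw uv; apply: H. Qed.

Lemma meet_uniq (v w m m' : T) : is_meet v w m -> is_meet v w m' -> m = m'.
Proof.
move=> [Nm mv mw H] [Nm' mv' mw' H']; apply: tle_anti => //; [apply: H'|apply: H] => //.
Qed.

Lemma le_lex (v w : T) : le v w -> lex v w.
Proof. by left. Qed.

Lemma lex_anti (v w : T) : N v -> N w -> lex v w -> lex w v -> v = w.
Proof.
move=> Nv Nw [vw|[nvw [nwv [m1 [a1 [b1 [[M1 A1 B1 a1v b1w] [ab1 so1]]]]]]]];
  case=> [wv|[nwv' [nvw' [m2 [a2 [b2 [[M2 A2 B2 a2w b2v] [ab2 so2]]]]]]]].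
- exact: tle_anti.
- by exfalso; apply: nvw'.
- by exfalso; apply: nvw.
- have e := meet_uniq M1 (meet_sym M2); subst m2.
  have e1 := uniq_succ A1 B2 Nv a1v b2v; subst b2.
  have e2 := uniq_succ B1 A2 Nw b1w a2w; subst a2.
  by exfalso; apply: ab1; apply: (so_anti A1 B1).
Qed.

Lemma lex_total (v w : T) : N v -> N w -> lex v w \/ lex w v.
Proof.
move=> Nv Nw.
have [vw|nvw] := classic (le v w); first by left; left.
have [wv|nwv] := classic (le w v); first by right; left.
have [m M] := meet_ex Nv Nw; case: (M) => Nm mv mw Hm.
have nmv : m <> v by move=> e; subst m.
have nmw : m <> w by move=> e; subst m.
have [a [A av]] := succ_ex Nm Nv mv nmv.
have [b [B bw]] := succ_ex Nm Nw mw nmw.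
have nab : a <> b.
  move=> e; subst b; case: (A) => _ Na ma nma _.
  by apply: nma; apply: tle_anti => //; apply: Hm.
have [sab|sba] := so_total A B.
- by left; right; split=> //; split=> //; exists m, a, b.
- right; right; split=> //; split=> //; exists m, b, a; split=> //.
  split=> //; first by apply: meet_sym.
  by split=> // e; apply: nab.
Qed.

Lemma lex_trans (u v w : T) : N u -> N v -> N w -> lex u v -> lex v w -> lex u w.
Proof.
move=> Nu Nv Nw.
case=> [uv | [nuv [nvu [m1 [a1 [b1 [[M1 A1 B1 a1u b1v] [ab1 so1]]]]]]]];
case=> [vw | [nvw [nwv [m2 [a2 [b2 [[M2 A2 B2 a2v b2w] [ab2 so2]]]]]]]].
- by left; apply: (tle_trans Nu Nv Nw).
- have [uw|nuw] := classic (le u w); first by left.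
  case: (M2) => Nm2 m2v m2w Hm2.
  right; split=> //; split.
    by move=> wu; apply: nwv; apply: (tle_trans Nw Nu Nv).
  have [um2|m2u] := tle_lin Nu Nm2 Nv uv m2v.
    by exfalso; apply: nuw; apply: (tle_trans Nu Nm2 Nw).
  have num2 : u <> m2 by move=> e; subst u.
  exists m2, a2, b2; split; last by [].
  split=> //; last by apply: (succ_below A2 Nv a2v Nu m2u uv num2).
  split=> // x Nx xu xw; apply: Hm2 => //; exact: (tle_trans Nx Nu Nv).
- have [uw|nuw] := classic (le u w); first by left.
  case: (M1) => Nm1 m1u m1v Hm1.
  right; split=> //; split.
    by move=> wu; apply: nvu; apply: (tle_trans Nv Nw Nu).
  exists m1, a1, b1; split; last by [].
  split=> //; last by apply: (tle_trans _ Nv Nw); case: B1.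
  split=> //; first by apply: (tle_trans Nm1 Nv Nw).
  move=> x Nx xu xw.
  have [xv|vx] := tle_lin Nx Nv Nw xw vw; first by apply: Hm1.
  by exfalso; apply: nvu; apply: (tle_trans Nv Nx Nu).
- case: (M1) => Nm1 m1u m1v Hm1.
  case: (M2) => Nm2 m2v m2w Hm2.
  case: (A1) => _ Na1 _ _ _; case: (B1) => _ Nb1 _ _ _.
  case: (A2) => _ Na2 _ _ _; case: (B2) => _ Nb2 _ _ _.
  have [e|nm12] := classic (m1 = m2).
  + subst m2.
    have e := uniq_succ B1 A2 Nv b1v a2v; subst a2.
    have nab : a1 <> b2.
      by move=> e; subst b2; apply: ab1; apply: (so_anti A1 B1).
    right; split.
      by move=> uw; apply: nab; apply: (uniq_succ A1 B2 Nw) => //; apply: (tle_trans Na1 Nu Nw).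
    split.
      by move=> wu; apply: nab; apply: (uniq_succ A1 B2 Nu) => //; apply: (tle_trans Nb2 Nw Nu).
    exists m1, a1, b2; split; last by split=> //; apply: (so_trans A1 B1 B2).
    split=> //; split=> // x Nx xu xw.
    have [//|m1x] := tle_lin Nx Nm1 Nu xu m1u.
    have [->|nx] := classic (x = m1); first by apply: tle_refl.
    have a1x := succ_below A1 Nu a1u Nx m1x xu nx.
    have b2x := succ_below B2 Nw b2w Nx m1x xw nx.
    by exfalso; apply: nab; apply: (uniq_succ A1 B2 Nx).
  + have [m12|m21] := tle_lin Nm1 Nm2 Nv m1v m2v.
    * have b1m2 := succ_below B1 Nv b1v Nm2 m12 m2v (fun e => nm12 (esym e)).
      have b1w := tle_trans Nb1 Nm2 Nw b1m2 m2w.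
      right; split.
        move=> uw; apply: ab1; apply: (uniq_succ A1 B1 Nw) => //.
        exact: (tle_trans Na1 Nu Nw).
      split.
        move=> wu; apply: nm12; apply: tle_anti => //; apply: Hm1 => //.
        exact: (tle_trans Nm2 Nw Nu).
      exists m1, a1, b1; split; last by [].
      split=> //; split=> //; first by apply: (tle_trans Nm1 Nm2 Nw).
      move=> x Nx xu xw.
      have [//|m1x] := tle_lin Nx Nm1 Nu xu m1u.
      have [->|nx] := classic (x = m1); first by apply: tle_refl.
      have a1x := succ_below A1 Nu a1u Nx m1x xu nx.
      exfalso; apply: ab1; apply: (uniq_succ A1 B1 Nw) => //.
      exact: (tle_trans Na1 Nx Nw).
    * have a2m1 := succ_below A2 Nv a2v Nm1 m21 m1v nm12.
      have a2u := tle_trans Na2 Nm1 Nu a2m1 m1u.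
      right; split.
        move=> uw; apply: nm12; apply: tle_anti => //; apply: Hm2 => //.
        exact: (tle_trans Nm1 Nu Nw).
      split.
        move=> wu; apply: ab2; apply: (uniq_succ A2 B2 Nu) => //.
        exact: (tle_trans Nb2 Nw Nu).
      exists m2, a2, b2; split; last by [].
      split=> //; split=> //; first by apply: (tle_trans Nm2 Nm1 Nu).
      move=> x Nx xu xw.
      have [//|m2x] := tle_lin Nx Nm2 Nw xw m2w.
      have [->|nx] := classic (x = m2); first by apply: tle_refl.
      have b2x := succ_below B2 Nw b2w Nx m2x xw nx.
      exfalso; apply: ab2; apply: (uniq_succ A2 B2 Nu) => //.
      exact: (tle_trans Nb2 Nx Nu).
Qed.

Lemma sub_down (x y z : T) : N x -> N y -> lex y x -> N z -> le z y -> lex z x.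
Proof. move=> Nx Ny yx Nz zy; exact: (lex_trans Nz Ny Nx (le_lex zy) yx). Qed.

Lemma isucc_sub_T (x a b : T) : N x -> @isucc (subtree x) a b -> isucc a b.
Proof.
move=> Nx [[Na ax] [Nb bx] ab nab H]; split=> // z Nz az zb; apply: H => //.
by split=> //; apply: (sub_down Nx Nb bx).
Qed.

Lemma isucc_T_sub (x a b : T) : lex a x -> lex b x -> isucc a b -> @isucc (subtree x) a b.
Proof.
move=> ax bx [Na Nb ab nab H]; split=> //; move=> z [Nz _]; exact: H.
Qed.

Lemma meet_sub_T (x v w m : T) : N x -> N v -> lex v x -> @is_meet (subtree x) v w m -> is_meet v w m.
Proof.
move=> Nx Nv vx [[Nm _] mv mw H]; split=> // u Nu uv uw; apply: H => //.
by split=> //; apply: (sub_down Nx Nv vx).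
Qed.

Lemma meet_T_sub (x v w m : T) : N x -> N v -> lex v x -> is_meet v w m -> @is_meet (subtree x) v w m.
Proof.
move=> Nx Nv vx [Nm mv mw H]; split=> //; last by move=> u [Nu _]; apply: H.
by split=> //; apply: (sub_down Nx Nv vx).
Qed.

Lemma lex_sub_T (x v w : T) : N x -> N v -> lex v x -> N w -> lex w x ->
  @lex (subtree x) v w -> lex v w.
Proof.
move=> Nx Nv vx Nw wx [vw|[nvw [nwv [m [a [b [[M A B av bw] H]]]]]]]; first by left.
right; split=> //; split=> //; exists m, a, b; split=> //; split.
- exact: (meet_sub_T Nx Nv vx).
- exact: (isucc_sub_T Nx).
- exact: (isucc_sub_T Nx).
- done.
- done.
Qed.

Lemma lex_T_sub (x v w : T) : N x -> N v -> lex v x -> N w -> lex w x ->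
  lex v w -> @lex (subtree x) v w.
Proof.
move=> Nx Nv vx Nw wx [vw|[nvw [nwv [m [a [b [[M A B av bw] H]]]]]]]; first by left.
case: (A) => Nm Na _ _ _; case: (B) => _ Nb _ _ _.
right; split=> //; split=> //; exists m, a, b; split=> //; split.
- exact: (meet_T_sub Nx Nv vx).
- have mx : lex m x by apply: (sub_down Nx Nv vx) => //; case: M.
  exact: (isucc_T_sub mx (sub_down Nx Nv vx Na av) A).
- have mx : lex m x by apply: (sub_down Nx Nv vx) => //; case: M.
  exact: (isucc_T_sub mx (sub_down Nx Nw wx Nb bw) B).
- done.
- done.
Qed.

Lemma sub_otree (x : T) : N x -> is_otree (subtree x).
Proof.
move=> Nx; split.
  have [r [Nr Hr]] := troot.
  split.
  - exists r; split; first by split=> //; left; apply: Hr.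
    by move=> w [Nw _]; apply: Hr.
  - by move=> v [Nv _]; apply: tle_refl.
  - by move=> v w [Nv _] [Nw _]; apply: tle_anti.
  - by move=> u v w [Nu _] [Nv _] [Nw _]; apply: tle_trans.
  - by move=> u u' w [Nu _] [Nu' _] [Nw _]; apply: tle_lin.
move=> y [Ny _]; split.
- by move=> a /(isucc_sub_T Nx) A; apply: so_refl A.
- by move=> a b /(isucc_sub_T Nx) A /(isucc_sub_T Nx) B; exact: (so_anti A B).
- by move=> a b c /(isucc_sub_T Nx) A /(isucc_sub_T Nx) B /(isucc_sub_T Nx) C; exact: (so_trans A B C).
- by move=> a b /(isucc_sub_T Nx) A /(isucc_sub_T Nx) B; exact: (so_total A B).
Qed.

Lemma root_sub_T (x r : T) : N x -> @is_root (subtree x) r -> is_root r.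
Proof.
move=> Nx [[Nr _] H]; have [r0 [Nr0 H0]] := troot.
have rr0 : le r r0 by apply: H; split=> //; left; apply: H0.
split=> // w Nw; apply: (tle_trans Nr Nr0 Nw) => //; exact: H0.
Qed.

Lemma root_T_sub (x r : T) : N x -> is_root r -> @is_root (subtree x) r.
Proof.
move=> Nx [Nr H]; split; first by split=> //; left; apply: H.
by move=> w [Nw _]; apply: H.
Qed.

Lemma largest_leaf_sub (x : T) : N x -> @is_largest_leaf (subtree x) x.
Proof.
move=> Nx; split.
  split; first by split=> //; left; apply: tle_refl.
  move=> w [Nw wx] xw; exact: (lex_anti Nw Nx wx (le_lex xw)).
move=> l [[Nl lx] _]; apply: lex_T_sub => //; left; exact: tle_refl.
Qed.

Lemma largest_leaf_sub_eq (x l : T) : N x -> @is_largest_leaf (subtree x) l -> l = x.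
Proof.
move=> Nx [[[Nl lx] _] H].
have [[Px _] _] := largest_leaf_sub Nx.
have xl := H x (proj1 (largest_leaf_sub Nx)).
have xl' := lex_sub_T Nx Nx (proj2 Px) Nl lx xl.
exact: (lex_anti Nl Nx lx xl').
Qed.

End Gen.

Theorem lemma4p2 (S T : otree) (f : T -> S) (i : S -> T) (v : S) :
  is_otree S -> is_otree T ->
  rigid_surjection f -> is_injection_of f i -> @ot_nodes S v ->
  [/\ is_otree (subtree (i v)), is_otree (subtree v),
      (forall s : S, @ot_nodes (subtree v) s <->
         exists w : T, @ot_nodes (subtree (i v)) w /\ f w = s) &
      @sealed (subtree (i v)) (subtree v) f].
Proof.
move=> oS oT [fN _] [[iN imeet ilex iroot] fi ifw] Nv.
have Niv := iN v Nv.
have mono : forall w, @ot_nodes T w -> lex w (i v) -> lex (f w) v.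
  move=> w Nw wiv; have Nfw := fN w Nw.
  case: (lex_total oS Nfw Nv) => // vfw.
  have h1 := ilex _ _ Nv Nfw vfw.
  have h2 : lex (i (f w)) (i v).
    apply: (lex_trans oT (iN _ Nfw) Nw Niv _ wiv); left; exact: ifw.
  have e := lex_anti oT (iN _ Nfw) Niv h2 h1.
  have e' : f w = v by rewrite -(fi _ Nfw) e fi.
  by rewrite e'; left; apply: (tle_refl oS).
have subC : forall s : S, @ot_nodes (subtree v) s <->
         exists w : T, @ot_nodes (subtree (i v)) w /\ f w = s.
  move=> s; split.
  - move=> [Ns sv]; exists (i s); split; last exact: fi.
    by split; [apply: iN | apply: ilex].
  - by move=> [w [[Nw wiv] <-]]; split; [apply: fN | apply: mono].
have injS : @is_injection_of (subtree (i v)) (subtree v) f i.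
  split.
  - split.
    + by move=> s [Ns sv]; split; [apply: iN | apply: ilex].
    + move=> s w m [Ns sv] [Nw wv] M.
      have M' := meet_sub_T oS Nv Ns sv M.
      apply: (meet_T_sub oT Niv (iN _ Ns) (ilex _ _ Ns Nv sv)).
      exact: imeet.
    + move=> s w [Ns sv] [Nw wv] sw.
      have sw' := lex_sub_T oS Nv Ns sv Nw wv sw.
      apply: (lex_T_sub oT Niv (iN _ Ns) (ilex _ _ Ns Nv sv) (iN _ Nw) (ilex _ _ Nw Nv wv)).
      exact: ilex.
    + move=> r R; have R' := root_sub_T oS Nv R.
      exact: (root_T_sub Niv (iroot _ R')).
  - by move=> s [Ns _]; apply: fi.
  - by move=> w [Nw _]; apply: ifw.
split.
- exact: (sub_otree oT Niv).
- exact: (sub_otree oS Nv).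
- exact: subC.
- split.
    split; last by exists i.
    by move=> w Pw; apply/subC; exists w.
  move=> e [[eN _ _ _] fe _] l L.
  have el := largest_leaf_sub_eq oS Nv L; subst l.
  have [Nev evi] : @ot_nodes (subtree (i v)) (e v).
    by apply: eN; split=> //; left; apply: (tle_refl oS).
  have fev : f (e v) = v by apply: fe; split=> //; left; apply: (tle_refl oS).
  have h := ifw _ Nev; rewrite fev in h.
  have -> : e v = i v by apply: (lex_anti oT Nev Niv evi); left.
  exact: (largest_leaf_sub oT Niv).
Qed.
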